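(* Let $t,t'\in B_n$ with $t\neq t'$, let $G$ be a digraph such that $\mathbb{A}(G)$ satisfies $t\approx t'$, and write $L=L_{t,t'}$, $\lambda=\lambda_{t,t'}$. Assume that $E_G=L+1$, that $u_0\to u_1\to\dots\to u_L\to u_{L+1}$ is an entryway to a nontrivial strongly connected component $K$, that $w$ is a vertex of $K$ with $(w,u_{L+1})\in E(G)$, and that $v_0\to v_1\to\dots\to v_\lambda$ is a walk in $G$. Then $(w,v_0)$ is an edge if and only if $(u_L,v_0)$ is an edge. Consequently, $\lambda_G<\lambda_{t,t'}$.
   Context: Digraphs $G=(V,E)$ have $E\subseteq V\times V$, loops allowed, possibly infinite. $\mathbb{A}(G)$ is the groupoid on $V\cup\{\infty\}$ with $xy=x$ if $x,y\in V$, $(x,y)\in E$, and $xy=\infty$ otherwise. $B_n$: binary terms with $x_1,\dots,x_n$ each occurring once in this order; $G(t)$: rooted tree defined by $G(x_i)$ a single vertex and $G(t_1t_2)=G(t_1)\cup G(t_2)$ plus an edge from the leftmost variable of $t_1$ to that of $t_2$; root $x_1$. $d_T$ is depth, $h$ height, $T_x$ the rooted induced subtree of $x$ and its descendants. With $T=G(t)$, $T'=G(t')$: $L_{t,t'}$ is the largest $m$ such that for all $x$, $d_T(x)\le m$ or $d_{T'}(x)\le m$ implies $d_T(x)=d_{T'}(x)$; $\Lambda=\{x:d_T(x)\ne d_{T'}(x),\ L_{t,t'}+1\in\{d_T(x),d_{T'}(x)\}\}$ and $\lambda_{t,t'}=\min\{\max(h(T_x),h(T'_x)):x\in\Lambda\}$.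 A strongly connected component (SCC) is trivial if it is a single vertex without a loop, nontrivial otherwise. A path $v_0\to\dots\to v_\ell$ is an entryway to a nontrivial SCC $K$ if $v_0,\dots,v_{\ell-1}$ lie in trivial SCCs and $v_\ell\in K$; $E_G$ is the maximal length of an entryway ($\infty$ if unbounded, $-\infty$ if none). $\lambda_G$ is the largest integer $m$ such that there exist an entryway $u_0\to\dots\to u_{E_G}$ to a nontrivial SCC $K$, a vertex $w\in K$ with $(w,u_{E_G})\in E$, and a walk $v_0\to\dots\to v_m$ such that exactly one of $(w,v_0)$, $(u_{E_G-1},v_0)$ is an edge ($\infty$ if unbounded, $-\infty$ if no such $m$). *)

(* Defs.v *)
From mathcomp Require Import all_boot.
Set Implicit Arguments. Unset Strict Implicit. Unset Printing Implicit Defensive.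

Inductive term : Type := Var of nat | App of term & term.

Fixpoint leaves (t : term) : seq nat :=
  match t with Var i => [:: i] | App t1 t2 => leaves t1 ++ leaves t2 end.

(* B_n, with variables x_1..x_n encoded as 0..n-1 *)
Definition in_B (n : nat) (t : term) : Prop := leaves t = iota 0 n.

Fixpoint lv (t : term) : nat :=
  match t with Var i => i | App t1 _ => lv t1 end.

(* None plays the role of infinity *)
Definition gmul (V : Type) (E : V -> V -> bool) (a b : option V) : option V :=
  match a, b with
  | Some x, Some y => if E x y then Some x else None
  | _, _ => None
  end.

Fixpoint eval (V : Type) (E : V -> V -> bool) (s : nat -> option V) (t : term)
  : option V :=
  match t with
  | Var i => s i
  | App t1 t2 => gmul E (eval E s t1) (eval E s t2)
  end.

Definition satisfies (V : Type) (E : V -> V -> bool) (t t' : term) : Prop :=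
  forall s : nat -> option V, eval E s t = eval E s t'.

Definition is_walk (T : Type) (E : T -> T -> bool) (p : nat -> T) (k : nat) : Prop :=
  forall i, i < k -> E (p i) (p i.+1).

Fixpoint tedge (t : term) (a b : nat) : bool :=
  match t with
  | Var _ => false
  | App t1 t2 => [|| tedge t1 a b, tedge t2 a b | (a == lv t1) && (b == lv t2)]
  end.

Fixpoint depth (t : term) (x : nat) : nat :=
  match t with
  | Var _ => 0
  | App t1 t2 => if x \in leaves t1 then depth t1 x else (depth t2 x).+1
  end.

Definition height (t : term) (x h : nat) : Prop :=
  (exists p : nat -> nat, p 0 = x /\ is_walk (tedge t) p h) /\
  (forall (p : nat -> nat) k, p 0 = x -> is_walk (tedge t) p k -> k <= h).

Definition L_prop (n : nat) (t t' : term) (m : nat) : Prop :=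
  forall x, x < n -> (depth t x <= m \/ depth t' x <= m) -> depth t x = depth t' x.

Definition is_L (n : nat) (t t' : term) (L : nat) : Prop :=
  L_prop n t t' L /\ forall m, L_prop n t t' m -> m <= L.

Definition in_Lambda (n : nat) (t t' : term) (L x : nat) : Prop :=
  x < n /\ depth t x <> depth t' x /\
  (depth t x = L.+1 \/ depth t' x = L.+1).

Definition is_lambda (n : nat) (t t' : term) (L lam : nat) : Prop :=
  (exists x h h', in_Lambda n t t' L x /\ height t x h /\ height t' x h' /\
                  lam = maxn h h') /\
  (forall x h h', in_Lambda n t t' L x -> height t x h -> height t' x h' ->
                  lam <= maxn h h').

Definition reach (V : Type) (E : V -> V -> bool) (x y : V) : Prop :=
  exists (p : nat -> V) k, p 0 = x /\ p k = y /\ is_walk E p k.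

Definition sc (V : Type) (E : V -> V -> bool) (x y : V) : Prop :=
  reach E x y /\ reach E y x.

Definition trivial_scc (V : Type) (E : V -> V -> bool) (v : V) : Prop :=
  (forall u, sc E u v -> u = v) /\ ~~ E v v.

Definition entryway (V : Type) (E : V -> V -> bool) (u : nat -> V) (l : nat) : Prop :=
  is_walk E u l /\ (forall i, i < l -> trivial_scc E (u i)) /\ ~ trivial_scc E (u l).

Inductive ext : Type := NegInf | Fin of nat | PosInf.

Definition ext_lt (a b : ext) : Prop :=
  match a, b with
  | NegInf, NegInf => False
  | NegInf, _ => True
  | Fin x, Fin y => x < y
  | Fin _, PosInf => True
  | _, _ => False
  end.

Definition is_sup_ext (P : nat -> Prop) (x : ext) : Prop :=
  match x with
  | NegInf => ~ (exists m, P m)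
  | Fin m => P m /\ (forall m', P m' -> m' <= m)
  | PosInf => forall k, exists m, P m /\ k <= m
  end.

Definition EG_is (V : Type) (E : V -> V -> bool) (x : ext) : Prop :=
  is_sup_ext (fun l => exists u, entryway E u l) x.

Definition lambdaG_set (V : Type) (E : V -> V -> bool) (m : nat) : Prop :=
  exists (e : nat) (u : nat -> V) (w : V) (v : nat -> V),
    EG_is E (Fin e.+1) /\ entryway E u e.+1 /\ sc E w (u e.+1) /\
    E w (u e.+1) /\ is_walk E v m /\ E w (v 0) != E (u e) (v 0).

Definition lambdaG_is (V : Type) (E : V -> V -> bool) (x : ext) : Prop :=
  is_sup_ext (lambdaG_set E) x.

(* Main.v *)
Require Import Defs.
From mathcomp Require Import all_boot.
From Stdlib Require Import Classical ClassicalEpsilon.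
From mathcomp Require Import zify.
Set Implicit Arguments. Unset Strict Implicit. Unset Printing Implicit Defensive.

Definition PW (t : term) := pairwise ltn (leaves t).

Lemma PW_App t1 t2 : PW (App t1 t2) -> [/\ PW t1, PW t2 &
  forall a b, a \in leaves t1 -> b \in leaves t2 -> a < b].
Proof.
rewrite /PW /= pairwise_cat => /and3P [H1 H2 H3]; split => //.
by move=> a b ha hb; move/allrelP: H1; apply.
Qed.

Lemma lv_in t : lv t \in leaves t.
Proof. by elim: t => [i|t1 IH1 t2 IH2] /=; rewrite ?inE // mem_cat IH1. Qed.

Lemma depth_lv t : depth t (lv t) = 0.
Proof. by elim: t => [i|t1 IH1 t2 IH2] //=; rewrite lv_in. Qed.

Lemma tedge_in t a b : tedge t a b -> a \in leaves t /\ b \in leaves t.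
Proof.
elim: t => [i|t1 IH1 t2 IH2] //= /or3P [/IH1 [? ?]|/IH2 [? ?]|/andP [/eqP -> /eqP ->]];
  rewrite !mem_cat; try (by split; apply/orP; left); try (by split; apply/orP; right).
by rewrite lv_in lv_in orbT.
Qed.

Lemma tedge_lt t a b : PW t -> tedge t a b -> a < b.
Proof.
elim: t => [i|t1 IH1 t2 IH2] //= /PW_App [P1 P2 P3] /or3P [/IH1|/IH2|/andP [/eqP -> /eqP ->]]; auto.
by apply: P3; apply: lv_in.
Qed.

Lemma disj t1 t2 a : PW (App t1 t2) -> a \in leaves t1 -> a \in leaves t2 -> False.
Proof.
move=> /PW_App [_ _ P3] h1 h2; have := P3 _ _ h1 h2; by rewrite ltnn.
Qed.

Lemma tedge_depth t a b : PW t -> tedge t a b -> depth t b = (depth t a).+1.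
Proof.
elim: t => [i|t1 IH1 t2 IH2] //= HP; have [P1 P2 P3] := PW_App HP.
move=> /or3P [H|H|/andP [/eqP -> /eqP ->]].
- have [ha hb] := tedge_in H; rewrite ha hb; exact: IH1.
- have [ha hb] := tedge_in H.
  have ha' : a \notin leaves t1 by apply/negP => h; exact: (disj HP h ha).
  have hb' : b \notin leaves t1 by apply/negP => h; exact: (disj HP h hb).
  by rewrite (negbTE ha') (negbTE hb') (IH2 P2 H).
- have hb' : lv t2 \notin leaves t1 by apply/negP => h; exact: (disj HP h (lv_in t2)).
  by rewrite lv_in (negbTE hb') !depth_lv.
Qed.

Lemma parent_uniq t a a' b : PW t -> tedge t a b -> tedge t a' b -> a = a'.
Proof.
elim: t => [i|t1 IH1 t2 IH2] //= HP; have [P1 P2 P3] := PW_App HP.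
move=> /or3P [H|H|/andP [/eqP -> /eqP ->]] /or3P [H'|H'|/andP [/eqP -> /eqP E']].
- exact: IH1 H H'.
- by case: (disj HP (tedge_in H).2 (tedge_in H').2).
- by subst b; case: (disj HP (tedge_in H).2 (lv_in t2)).
- by case: (disj HP (tedge_in H').2 (tedge_in H).2).
- exact: IH2 H H'.
- subst b; have := tedge_depth P2 H; by rewrite depth_lv.
- by case: (disj HP (tedge_in H').2 (lv_in t2)).
- have := tedge_depth P2 H'; by rewrite depth_lv.
- by [].
Qed.

Lemma parent_ex t x : x \in leaves t -> x <> lv t -> exists q, tedge t q x.
Proof.
elim: t => [i|t1 IH1 t2 IH2] /=; first by rewrite inE => /eqP.
rewrite mem_cat => /orP [h|h] hne.
- by have [q hq] := IH1 h hne; exists q; rewrite hq.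
- case: (eqVneq x (lv t2)) => [->|hne2].
  + by exists (lv t1); rewrite !eqxx !orbT.
  + by have [q hq] := IH2 h (elimN eqP hne2); exists q; rewrite hq orbT.
Qed.

Lemma walk_depth t p k : PW t -> is_walk (tedge t) p k -> depth t (p k) = depth t (p 0) + k.
Proof.
move=> HP; elim: k => [|k IH] W; first by rewrite addn0.
rewrite (tedge_depth HP (W k (ltnSn k))) IH ?addnS // => i hi; apply: W; lia.
Qed.

Lemma walk_le t p k : PW t -> is_walk (tedge t) p k -> p 0 <= p k.
Proof.
move=> HP; elim: k => [|k IH] W //.
have := tedge_lt HP (W k (ltnSn k)); have : p 0 <= p k by apply: IH => i hi; apply: W; lia.
lia.
Qed.

Section Ev.
Variables (V : Type) (E : V -> V -> bool).

Lemma hom_eval (f : nat -> V) t : (forall a b, tedge t a b -> E (f a) (f b)) ->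
  eval E (fun i => Some (f i)) t = Some (f (lv t)).
Proof.
elim: t => [i|t1 IH1 t2 IH2] //= H.
rewrite IH1 ?IH2 /=; first by rewrite H // !eqxx !orbT.
- by move=> a b h; apply: H; rewrite h orbT.
- by move=> a b h; apply: H; rewrite h.
Qed.

Lemma eval_shape (f : nat -> V) t :
  eval E (fun i => Some (f i)) t = None \/ eval E (fun i => Some (f i)) t = Some (f (lv t)).
Proof.
elim: t => [i|t1 IH1 t2 IH2] /=; first by right.
case: IH1 => ->; first by left.
case: IH2 => ->; first by left.
by rewrite /=; case: (E _ _); [right|left].
Qed.

Lemma eval_hom (f : nat -> V) t : eval E (fun i => Some (f i)) t <> None ->
  forall a b, tedge t a b -> E (f a) (f b).
Proof.
elim: t => [i|t1 IH1 t2 IH2] //= H a b.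
case: (eval_shape f t1) H => [->|e1]; first by case.
case: (eval_shape f t2) => [->|e2]; first by rewrite e1; case.
rewrite e1 e2 /=; case: ifP => // He _.
move=> /or3P [h|h|/andP [/eqP -> /eqP ->]] //.
- by apply: IH1 => //; rewrite e1.
- by apply: IH2 => //; rewrite e2.
Qed.

Definition dec (P : Prop) : bool := if excluded_middle_informative P then true else false.
Lemma decP (P : Prop) : dec P = true <-> P.
Proof. by rewrite /dec; case: excluded_middle_informative. Qed.
Lemma decN (P : Prop) : ~ P -> dec P = false.
Proof. by rewrite /dec; case: excluded_middle_informative. Qed.

Lemma core t t' (X v : nat -> V) lam h x q p s :
  PW t -> PW t' -> satisfies E t t' -> (forall i, E (X i) (X i.+1)) -> is_walk E v lam ->
  height t x h -> h <= lam -> tedge t q x -> tedge t' p x ->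
  E (X (depth t q + s)) (v 0) -> E (X (depth t p + s)) (v 0).
Proof.
move=> HP HP' Sat WX Wv [_ Hh] hlam Eq Ep Hq.
pose f := fun y => if dec (reach (tedge t) x y)
  then v (depth t y - depth t x) else X (depth t y + s).
have Hom : forall a b, tedge t a b -> E (f a) (f b).
  move=> a b Hab; rewrite /f.
  case: (classic (reach (tedge t) x a)) => Ra.
  - have [pw [k [p0 [pk W]]]] := Ra.
    have da := walk_depth HP W; rewrite p0 pk in da.
    pose pw' := fun i => if i <= k then pw i else b.
    have W' : is_walk (tedge t) pw' k.+1.
      move=> i hi; rewrite /pw'; case: (ltnP i k) => hik.
      + by rewrite (ltnW hik); apply: W.
      + have -> : i = k by lia.
        by rewrite leqnn pk.
    have Rb : reach (tedge t) x b.
      exists pw', k.+1; split; first by rewrite /pw' /= p0.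
      by split; first rewrite /pw' ltnn.
    rewrite (proj2 (decP _) Ra) (proj2 (decP _) Rb).
    have hk := Hh pw' k.+1 (ltac:(by rewrite /pw' /= p0)) W'.
    rewrite (tedge_depth HP Hab) da.
    have -> : (depth t x + k).+1 - depth t x = k.+1 by lia.
    have -> : depth t x + k - depth t x = k by lia.
    apply: Wv; lia.
  - rewrite (decN Ra).
    case: (classic (reach (tedge t) x b)) => Rb.
    + rewrite (proj2 (decP _) Rb).
      have [pw [k [p0 [pk W]]]] := Rb.
      case: k pk W => [|k] pk W.
      * rewrite p0 in pk; subst b.
        have -> := parent_uniq HP Hab Eq.
        by rewrite subnn.
      * have Ek : tedge t (pw k) b by rewrite -pk; apply: W.
        have := parent_uniq HP Hab Ek => Ea.
        exfalso; apply: Ra; exists pw, k; rewrite p0 Ea; split => //; split => // i hi.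
        apply: W; lia.
    + by rewrite (decN Rb) (tedge_depth HP Hab) addSn.
have ev := hom_eval Hom.
have ev' : eval E (fun i => Some (f i)) t' <> None by rewrite -Sat ev.
have := eval_hom ev' Ep; rewrite /f.
have Rx : reach (tedge t) x x by exists (fun _ => x), 0.
have Rp : ~ reach (tedge t) x p.
  move=> [pw [k [p0 [pk W]]]].
  have := walk_le HP W; rewrite p0 pk; have := tedge_lt HP' Ep; lia.
by rewrite (decN Rp) (proj2 (decP _) Rx) subnn.
Qed.
End Ev.

Lemma PW_B n t : in_B n t -> PW t.
Proof. by rewrite /PW => ->; rewrite -(sorted_pairwise ltn_trans) iota_ltn_sorted. Qed.

Lemma satisfies_sym V (E : V -> V -> bool) t t' : satisfies E t t' -> satisfies E t' t.
Proof. by move=> H s; rewrite H. Qed.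

Lemma L_prop_sym n t t' L : L_prop n t t' L -> L_prop n t' t L.
Proof. by move=> H x hx hd; symmetry; apply: H => //; case: hd; auto. Qed.

Lemma side V (E : V -> V -> bool) n t t' L lam x h h' (v : nat -> V) :
  in_B n t -> in_B n t' -> satisfies E t t' -> L_prop n t t' L -> x < n ->
  depth t x = L.+1 -> depth t' x <> L.+1 -> height t x h -> height t' x h' ->
  h <= lam -> h' <= lam -> is_walk E v lam ->
  exists M, 0 < M /\ forall X : nat -> V, (forall i, E (X i) (X i.+1)) ->
    (E (X L) (v 0) <-> E (X (L + M)) (v 0)).
Proof.
move=> Bt Bt' Sat LP xn dx dx' Hh Hh' hl hl' Wv.
have HP := PW_B Bt; have HP' := PW_B Bt'.
have xin : x \in leaves t by rewrite Bt mem_iota.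
have xin' : x \in leaves t' by rewrite Bt' mem_iota.
have [q Eq] : exists q, tedge t q x.
  by apply: parent_ex => // ex; move: dx; rewrite ex depth_lv.
have dq : depth t q = L by have := tedge_depth HP Eq; rewrite dx; case.
have qn : q < n by have := (tedge_in Eq).1; rewrite Bt mem_iota.
have dq' : depth t' q = L by rewrite -(LP q qn (or_introl (eq_leq dq))) ?dq //.
have dx'2 : L.+2 <= depth t' x.
  case: (ltnP L (depth t' x)) => hh; first by lia.
  by have := LP x xn (or_intror hh); lia.
have [p Ep] : exists p, tedge t' p x.
  by apply: parent_ex => // ex; move: dx'2; rewrite ex depth_lv.
have dp' := tedge_depth HP' Ep.
have pn : p < n by have := (tedge_in Ep).1; rewrite Bt' mem_iota.
have dp : L < depth t p.
  case: (ltnP L (depth t p)) => hh //.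
  by have := LP p pn (or_introl hh); lia.
exists ((depth t p - L) * (depth t' p - L)); split.
  by rewrite muln_gt0; apply/andP; split; lia.
move=> X WX.
have A : forall s, E (X (L + s)) (v 0) -> E (X (L + (depth t p - L) + s)) (v 0).
  move=> s; rewrite -dq => H.
  have -> : depth t q + (depth t p - depth t q) + s = depth t p + s by lia.
  exact: (core HP HP' Sat WX Wv Hh hl Eq Ep H).
have B : forall s, E (X (L + (depth t' p - L) + s)) (v 0) -> E (X (L + s)) (v 0).
  move=> s H.
  have := core HP' HP (satisfies_sym Sat) WX Wv Hh' hl' Ep Eq; rewrite dq'; apply.
  have -> : depth t' p + s = L + (depth t' p - L) + s by lia.
  exact: H.
have A' : forall k, E (X L) (v 0) -> E (X (L + k * (depth t p - L))) (v 0).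
  elim=> [|k IH] H; first by rewrite addn0.
  have := A _ (IH H); congr (E (X _) _); rewrite mulSn; lia.
have B' : forall k, E (X (L + k * (depth t' p - L))) (v 0) -> E (X L) (v 0).
  elim=> [|k IH] H; first by move: H; rewrite addn0.
  apply: IH; apply: B; move: H; congr (E (X _) _); rewrite mulSn; lia.
split.
- by move=> H; have := A' (depth t' p - L) H; rewrite mulnC.
- by move=> H; apply: (B' (depth t p - L)).
Qed.

Lemma cyc_walk V (E : V -> V -> bool) (c : nat -> V) k :
  is_walk E c k -> E (c k) (c 0) ->
  forall m, E (c (m %% k.+1)) (c (m.+1 %% k.+1)).
Proof.
move=> Wc Ek m.
have e : m.+1 %% k.+1 = (m %% k.+1).+1 %% k.+1 by rewrite -addn1 -modnDml addn1.
have hr := ltn_pmod m (ltn0Sn k).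
rewrite e; case: (ltnP (m %% k.+1) k) => hk.
- rewrite (modn_small (m := (m %% k.+1).+1)); [exact: Wc | lia].
- have -> : m %% k.+1 = k by lia.
  by rewrite modnn.
Qed.

Lemma part1 n t t' V (E : V -> V -> bool) L lam :
  in_B n t -> in_B n t' -> satisfies E t t' ->
  is_L n t t' L -> is_lambda n t t' L lam ->
  (forall (u : nat -> V) (w : V) (v : nat -> V),
      entryway E u L.+1 -> sc E w (u L.+1) -> E w (u L.+1) ->
      is_walk E v lam ->
      (E w (v 0) <-> E (u L) (v 0))).
Proof.
move=> Bt Bt' Sat [LP _] [[x [h [h' [[xn [dne dL]] [Hh [Hh' ->]]]]]] _] u w v [Wu [_ _]] [_ [c [k [c0 [ck Wc]]]]] Ew Wv.
have hl : h <= maxn h h' by apply: leq_maxl.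
have hl' : h' <= maxn h h' by apply: leq_maxr.
have [M [M0 HM]] : exists M, 0 < M /\ forall X : nat -> V, (forall i, E (X i) (X i.+1)) ->
    (E (X L) (v 0) <-> E (X (L + M)) (v 0)).
  case: dL => dL.
  - by apply: (side Bt Bt' Sat LP xn dL _ Hh Hh' hl hl' Wv); rewrite -dL; auto.
  - apply: (side Bt' Bt (satisfies_sym Sat) (L_prop_sym LP) xn dL _ Hh' Hh hl' hl Wv).
    by rewrite -dL; auto.
pose cyc := fun m => c (m %% k.+1).
have Wcyc : forall m, E (cyc m) (cyc m.+1).
  by move=> m; rewrite /cyc; apply: (cyc_walk Wc); rewrite ck c0.
pose X1 := fun i => if i <= L then u i else cyc (i - L.+1).
pose X2 := fun i => cyc (i + k * L.+1).
have W1 : forall i, E (X1 i) (X1 i.+1).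
  move=> i; rewrite /X1; case: (ltnP i L) => hi.
  - rewrite (ltnW hi) ?hi; apply: Wu; lia.
  - case: (eqVneq i L) => [->|hne].
    + rewrite leqnn ?ltnn subnn /cyc mod0n c0; apply: Wu; lia.
    + have h1 : (i <= L) = false by lia.
      have h2 : (i < L) = false by lia.
      rewrite h1 ?h2; have -> : i.+1 - L.+1 = (i - L.+1).+1 by lia.
      exact: Wcyc.
have W2 : forall i, E (X2 i) (X2 i.+1).
  by move=> i; rewrite /X2 addSn; apply: Wcyc.
have H1 := HM X1 W1; have H2 := HM X2 W2.
have e1 : X1 L = u L by rewrite /X1 leqnn.
have e2 : X2 L = w.
  rewrite /X2 /cyc -ck; congr c.
  have -> : L + k * L.+1 = L * k.+1 + k by rewrite mulnC; lia.
  by rewrite modnMDl modn_small.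
have e3 : X1 (L + M) = X2 (L + M).
  rewrite /X1 /X2 /cyc.
  have -> : (L + M <= L) = false by lia.
  have -> : L + M + k * L.+1 = L.+1 * k.+1 + (L + M - L.+1) by lia.
  by rewrite modnMDl.
rewrite e1 in H1; rewrite e2 in H2; rewrite H1 H2 e3.
by [].
Qed.

Lemma max_ex B (P : nat -> Prop) : (exists m, P m) -> (forall m, P m -> m <= B) ->
  exists m, P m /\ forall m', P m' -> m' <= m.
Proof.
elim: B => [|B IH] [m0 Pm0] HB.
- exists m0; split => // m' /HB; have := HB _ Pm0; lia.
- case: (classic (P B.+1)) => PB; first by exists B.+1.
  apply: IH; first by exists m0.
  move=> m Pm; have := HB _ Pm; case: (ltnP B m) => // h1 h2.
  have e : m = B.+1 by lia.
  by subst m.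
Qed.

Theorem lemma6p29 (n : nat) (t t' : term) (V : Type) (E : V -> V -> bool)
    (L lam : nat) :
  in_B n t -> in_B n t' -> t <> t' -> satisfies E t t' ->
  is_L n t t' L -> is_lambda n t t' L lam ->
  EG_is E (Fin L.+1) ->
  (forall (u : nat -> V) (w : V) (v : nat -> V),
      entryway E u L.+1 -> sc E w (u L.+1) -> E w (u L.+1) ->
      is_walk E v lam ->
      (E w (v 0) <-> E (u L) (v 0))) /\
  (exists x, lambdaG_is E x /\ ext_lt x (Fin lam)).
Proof.
move=> Bt Bt' _ Sat HL Hlam HEG.
have P1 := part1 Bt Bt' Sat HL Hlam.
split => //.
have bound : forall m, lambdaG_set E m -> m < lam.
  move=> m [e [u [w [v [EGe [Eu [scw [Ew [Wv Hne]]]]]]]]].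
  have ee : e = L.
    move: EGe HEG => [He1 He2] [HL1 HL2].
    have := He2 _ HL1; have := HL2 _ He1; lia.
  subst e.
  rewrite ltnNge; apply/negP => hm.
  have Wv' : is_walk E v lam by move=> i hi; apply: Wv; lia.
  have := P1 u w v Eu scw Ew Wv'.
  move: Hne; case: (E w (v 0)); case: (E (u L) (v 0)) => //= _ [H1 H2].
  - by have := H1 isT.
  - by have := H2 isT.
case: (classic (exists m, lambdaG_set E m)) => Hex.
- have [m [Pm Hm]] := max_ex Hex (fun m h => ltnW (bound m h)).
  by exists (Fin m); split => //=; apply: bound.
- by exists NegInf.
Qed.
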